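(* Let $\Pi_n$ be a standard PARITY$_n$ program such that no rule $y\leftarrow B$ of $\Pi_n$ has $y\in var(B)$ and every rule body of $\Pi_n$ is consistent. If $x\leftarrow B\in\Pi_n$ (with $x$ a variable) and $S(B\cup\{x\})=\{J\}$ for a single string $J$, then $J$ is an odd string.
   Context: A rule element is one of $\top$, $\bot$, $x$, $not\ x$, $not\ not\ x$, where $x$ is a variable. A (canonical) rule is $H\leftarrow B$ with $H$ a variable or $\bot$ and $B$ a finite set of rule elements; a canonical program is a finite set of rules. For a body $B$, $var(B)=\{e\in B: e\text{ is a variable}\}$. For a set of variables $I$: $I\models\top$; $I\not\models\bot$; $I\models x$ iff $I\models not\ not\ x$ iff $x\in I$; $I\models not\ x$ iff $x\notin I$; $I\models B$ iff $I$ satisfies every element of $B$; $I$ is closed under $H\leftarrow B$ if $I\models B$ implies $I\models H$. The reduct $\Pi^I$ replaces $not\ not\ x$ by $\top$ if $x\in I$ else $\bot$, and $not\ x$ by $\top$ if $x\notin I$ else $\bot$; $I$ is an answer set of $\Pi$ if $I$ is the least set closed under all rules of $\Pi^I$; $Ans(\Pi)$ is the set of answer sets; $var(\Pi)$ the set of variables occurring in $\Pi$. Strings $w\in\{0,1\}^n$ are identified with $\{x_i:w_i=1\}$; PARITY$_n$ is the set of strings in $\{0,1\}^n$ with an odd number of 1's (odd strings); a PARITY$_n$ program is a canonical program $\Pi$ with $var(\Pi)=\{x_1,\dots,x_n\}$ and $Ans(\Pi)=$ PARITY$_n$. For a set $B$ of rule elements, $S(B)=\{I\subseteq\{x_1,\dots,x_n\}: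 I\models B\}$; $B$ is consistent if $S(B)\neq\emptyset$. A PARITY$_n$ program $\Pi$ is standard if for every rule $x\leftarrow B\in\Pi$ with head a variable $x$: whenever $S(B\cup\{x\})$ has exactly one element, $not\ not\ x\notin B$. *)

(* Defs.v *)
From Stdlib Require List.
From mathcomp Require Import all_boot.
Set Implicit Arguments. Unset Strict Implicit. Unset Printing Implicit Defensive.

(* Variables are natural numbers; x_i is the number i (i = 1..n).
   A set of variables I is represented by its characteristic function. *)
Definition var := nat.
Definition interp := var -> bool.

Inductive elem := ETop | EBot | EVar of var | ENot of var | ENotNot of var.

(* head: Some x (variable) or None (bottom) ; body: finite list of elements *)
Record rule := Rule { head : option var; body : seq elem }.
Definition program := seq rule.

Definition sat_elem (I : interp) (e : elem) : bool :=
  match e with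
  | ETop => true
  | EBot => false
  | EVar x => I x
  | ENot x => ~~ I x
  | ENotNot x => I x
  end.

Definition sat_body (I : interp) (B : seq elem) : bool := all (sat_elem I) B.

Definition sat_head (I : interp) (h : option var) : bool :=
  match h with Some x => I x | None => false end.

Definition closed_rule (I : interp) (r : rule) : bool :=
  sat_body I (body r) ==> sat_head I (head r).

Definition closed_prog (I : interp) (P : program) : Prop :=
  forall r, List.In r P -> closed_rule I r.

Definition reduct_elem (I : interp) (e : elem) : elem :=
  match e with
  | ENotNot x => if I x then ETop else EBot
  | ENot x => if I x then EBot else ETop
  | e => e
  end.

Definition reduct_rule (I : interp) (r : rule) : rule :=
  Rule (head r) (map (reduct_elem I) (body r)).

Definition reduct (I : interp) (P : program) : program := map (reduct_rule I) P.

Definition least_closed (I : interp) (P : program) : Prop :=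
  closed_prog I P /\ (forall J : interp, closed_prog J P -> forall v, I v -> J v).

Definition answer_set (P : program) (I : interp) : Prop :=
  least_closed I (reduct I P).

Definition elem_vars (e : elem) : seq var :=
  match e with
  | ETop | EBot => [::]
  | EVar x | ENot x | ENotNot x => [:: x]
  end.

Definition rule_vars (r : rule) : seq var :=
  (if head r is Some x then [:: x] else [::]) ++ flatten (map elem_vars (body r)).

Definition prog_vars (P : program) : seq var := flatten (map rule_vars P).

(* strings of length n: sets I included in {x_1,...,x_n} *)
Definition is_string (n : nat) (I : interp) : Prop := forall v, I v -> 0 < v <= n.

Definition odd_string (n : nat) (I : interp) : Prop :=
  is_string n I /\ odd (count I (iota 1 n)).

Definition parity_program (n : nat) (P : program) : Prop :=
  (forall v, v \in prog_vars P <-> 0 < v <= n) /\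
  (forall I : interp, answer_set P I <-> odd_string n I).

Definition S (n : nat) (B : seq elem) (I : interp) : Prop :=
  is_string n I /\ sat_body I B.

Definition consistent (n : nat) (B : seq elem) : Prop := exists I, S n B I.

Definition S_singleton (n : nat) (B : seq elem) (J : interp) : Prop :=
  S n B J /\ (forall J', S n B J' -> forall v, J' v = J v).

Definition S_has_one (n : nat) (B : seq elem) : Prop := exists J, S_singleton n B J.

Definition standard (n : nat) (P : program) : Prop :=
  parity_program n P /\
  (forall x B, List.In (Rule (Some x) B) P ->
     S_has_one n (EVar x :: B) -> ~ List.In (ENotNot x) B).

(* Main.v *)
Require Import Defs.
From Stdlib Require List.
From mathcomp Require Import all_boot.

Lemma sat_reduct (I : interp) (B : seq elem) :
  sat_body I (map (reduct_elem I) B) = sat_body I B.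
Proof.
rewrite /sat_body all_map; apply: eq_all => e.
by case: e => //= v; case: (I v).
Qed.

Lemma count_split (J : interp) (x : var) (s : seq nat) :
  count J s = count (fun v => J v && (v == x)) s + count (fun v => J v && (v != x)) s.
Proof.
elim: s => //= a s ->.
by case: (J a); case: (a == x) => //=; rewrite ?addnS ?addSn.
Qed.

Lemma sat_drop (J : interp) (x : var) (B : seq elem) :
  J x -> ~ List.In (ENotNot x) B -> ~ List.In (EVar x) B ->
  sat_body J B -> sat_body (fun v => J v && (v != x)) B.
Proof.
move=> Jx; elim: B => //= e B IH H1 H2 /andP [He HB].
apply/andP; split; last by apply: IH => // H; [apply: H1 | apply: H2]; right.
case: e H1 H2 He => //= v H1 H2 He.
- by rewrite He; case: eqP => // E; subst; case: H2; left.
- by rewrite negb_and He.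
- by rewrite He; case: eqP => // E; subst; case: H1; left.
Qed.

Theorem mainTheorem14 (n : nat) (Pi : program)
  (Hstd : standard n Pi)
  (Hnoself : forall y B, List.In (Rule (Some y) B) Pi -> ~ List.In (EVar y) B)
  (Hcons : forall r, List.In r Pi -> consistent n (body r))
  (x : var) (B : seq elem) (J : interp)
  (Hr : List.In (Rule (Some x) B) Pi)
  (HJ : S_singleton n (EVar x :: B) J) :
  odd_string n J.
Proof.
have [[Hstr Hsat] _] := HJ.
move: Hsat; rewrite /sat_body /= => /andP [Jx HB].
split => //.
case Hodd: (odd (count J (iota 1 n))) => //.
exfalso.
have nNN : ~ List.In (ENotNot x) B.
  by apply: (Hstd.2 x B Hr); exists J.
have nV := Hnoself x B Hr.
have HB' := @sat_drop J x B Jx nNN nV HB.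
set J' : interp := fun v => J v && (v != x).
have Hodd' : odd_string n J'.
  split.
    by move=> v /andP [Jv _]; apply: Hstr.
  have := count_split J x (iota 1 n).
  have -> : count (fun v => J v && (v == x)) (iota 1 n) = count (pred1 x) (iota 1 n).
    apply: eq_count => v /=; case: eqP => [->|_]; by rewrite ?Jx ?andbF.
  rewrite count_uniq_mem ?iota_uniq // mem_iota.
  have := Hstr x Jx; case/andP => x0 xn.
  have -> : (1 <= x < 1 + n) by rewrite x0 /= add1n ltnS.
  move=> E; rewrite E /= in Hodd.
  by rewrite -/J'; move: Hodd; case: (odd _).
have [_ HA] := (Hstd.1.2 J').
have [Hcl _] := HA Hodd'.
have := Hcl _ (List.in_map (reduct_rule J') _ _ Hr).
rewrite /closed_rule /= sat_reduct HB' /= /J'.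
by rewrite eqxx andbF.
Qed.
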